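(* Let $n\ge2$, $d\ge1$, $r\ge3$ with $n\ge d$ and $dr\equiv0\pmod n$. Then $Q_n(d,r)$ is $G$-orbit proportional if and only if $n\equiv 0\pmod d$.
   Context: $\mathbb{Z}_2^n=\{0,1\}^n$ with coordinatewise addition mod 2; $e_i$ is the $i$-th standard basis vector, subscripts read modulo $n$; $\sigma^j(b)$ is the vector with $\sigma^j(b)_{i+j}=b_i$ (indices mod $n$). $G$ is the group on $\mathbb{Z}_2^n\times\mathbb{Z}_r$ with multiplication $(a,x)(b,y)=(a+\sigma^{dx}(b),x+y)$; $Q_n(d,r)$ is its Cayley graph with connection set $\{(0_n,1),(0_n,r-1),(e_1,0),\dots,(e_d,0)\}$, so $(a,x)$ is adjacent to $(a+e_{i+dx},x)$ for $1\le i\le d$ and to $(a,x\pm1)$. $G$ acts on the graph by left multiplication $u\mapsto gu$, and its orbits on edges are $E_0=\{\{(a,x),(a,x+1)\}\}$ and $E_i=\{\{(a,x),(a+e_{i+dx},x)\}\}$, $1\le i\le d$. A graph $X$ with edge partition into $H$-orbits $E_0,\dots,E_k$ is $H$-orbit proportional if for every pair of vertices $u,v$, every shortest $u$–$v$ path $P$ and every $u$–$v$ path $P'$ satisfy $|E(P)\cap E_i|\le|E(P')\cap E_i|$ for all $i$. *)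

(* Defs.v *)
From mathcomp Require Import all_boot.
Set Implicit Arguments. Unset Strict Implicit. Unset Printing Implicit Defensive.

(* Vertices of Q_n(d,r): pairs (a, x) with a in Z_2^n (boolean vectors indexed
   by 'I_n, coordinate k <-> e_k with indices read mod n) and x in Z_r. *)
Definition QV (n r : nat) : finType := ({ffun 'I_n -> bool} * 'I_r)%type.

Definition flip n (a : {ffun 'I_n -> bool}) (j : nat) : {ffun 'I_n -> bool} :=
  [ffun k : 'I_n => a k (+) (val k == j %% n)].

Definition inE0 n r (u v : QV n r) : bool :=
  (u.1 == v.1) &&
  ((val v.2 == (val u.2 + 1) %% r) || (val u.2 == (val v.2 + 1) %% r)).

Definition inEi n r (d i : nat) (u v : QV n r) : bool :=
  (u.2 == v.2) && (v.1 == flip u.1 (i + d * val u.2)).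

Definition inE n r (d i : nat) (u v : QV n r) : bool :=
  if i == 0 then inE0 u v else inEi d i u v.

Definition Qadj n d r (u v : QV n r) : bool :=
  inE0 u v || [exists i : 'I_d.+1, (0 < val i) && inEi d i u v].

(* p is (the list of vertices after u of) a u--v path: consecutive vertices
   adjacent, all vertices distinct, ending at v *)
Definition is_Qpath n d r (u v : QV n r) (p : seq (QV n r)) : Prop :=
  [/\ path (@Qadj n d r) u p, uniq (u :: p) & last u p = v].

Definition countE n r d i (u : QV n r) (p : seq (QV n r)) : nat :=
  count (fun e => inE d i e.1 e.2) (zip (u :: p) p).

(* G-orbit proportionality, with the edge orbits E_0,...,E_d of the context *)
Definition orbit_proportional n d r : Prop :=
  forall (u v : QV n r) (p p' : seq (QV n r)),
    is_Qpath d u v p -> is_Qpath d u v p' ->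
    (forall q, is_Qpath d u v q -> size p <= size q) ->
    forall i, i <= d -> countE d i u p <= countE d i u p'.

(* Main.v *)
Require Import Defs.
From mathcomp Require Import all_boot.
Set Implicit Arguments. Unset Strict Implicit. Unset Printing Implicit Defensive.

Definition mv r := ('I_r + nat)%type.

Definition lstep r (l : 'I_r) (m : mv r) : 'I_r :=
  match m with inl y => y | inr _ => l end.

Definition validm d r (l : 'I_r) (m : mv r) : bool :=
  match m with
  | inl y => (val y == (val l + 1) %% r) || (val l == (val y + 1) %% r)
  | inr i => (0 < i) && (i <= d)
  end.

Fixpoint validL d r (l : 'I_r) (ms : seq (mv r)) : bool :=
  match ms with
  | [::] => true
  | m :: ms' => validm d l m && validL d (lstep l m) ms'
  end.

Fixpoint fcL n d r (l : 'I_r) (ms : seq (mv r)) : seq nat :=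
  match ms with
  | [::] => [::]
  | inl y :: ms' => fcL n d y ms'
  | inr i :: ms' => (i + d * l) %% n :: fcL n d l ms'
  end.

Definition endL r (l : 'I_r) (ms : seq (mv r)) := foldl (@lstep r) l ms.

Definition step n d r (x : QV n r) (m : mv r) : QV n r :=
  match m with
  | inl y => (x.1, y)
  | inr i => (flip x.1 (i + d * x.2), x.2)
  end.

Fixpoint traj n d r (x : QV n r) (ms : seq (mv r)) : seq (QV n r) :=
  match ms with
  | [::] => [::]
  | m :: ms' => step d x m :: traj d (step d x m) ms'
  end.

Definition cls r (m : mv r) : nat := match m with inl _ => 0 | inr i => i end.
Definition isL r (m : mv r) : bool := match m with inl _ => true | inr _ => false end.

Lemma size_traj n d r (x : QV n r) ms : size (traj d x ms) = size ms.
Proof. by elim: ms x => //= m ms IH x; rewrite IH. Qed.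

Lemma last_traj n d r (x : QV n r) ms : last x (traj d x ms) = foldl (@step n d r) x ms.
Proof. by elim: ms x => //= m ms IH x; rewrite IH. Qed.

Lemma flip_eq n (a : {ffun 'I_n -> bool}) j k : 0 < n ->
  (flip a j == flip a k) = (j %% n == k %% n).
Proof.
move=> n0; apply/eqP/eqP => [E | E]; last by apply/ffunP => t; rewrite !ffunE E.
have := congr1 (fun f : {ffun 'I_n -> bool} => f (Ordinal (ltn_pmod j n0))) E.
rewrite !ffunE /= eqxx.
by case: (a _); case: eqP.
Qed.

Lemma small_mod_inj n i j : 0 < i <= n -> 0 < j <= n ->
  (i %% n == j %% n) = (i == j).
Proof.
move=> /andP[i0 ilen] /andP[j0 jlen].
apply/eqP/eqP; last by move=> ->.
case: (ltngtP i n) ilen => // [iltn|ein] _;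
  case: (ltngtP j n) jlen => // [jltn|ejn] _.
- by rewrite !modn_small.
- rewrite ejn modnn (modn_small iltn) => E. by rewrite E in i0.
- rewrite ein modnn (modn_small jltn) => E. by rewrite -E in j0.
- by rewrite ein ejn.
Qed.
Lemma succ_mod_neq r t : t < r -> 1 < r -> ((t + 1) %% r == t) = false.
Proof.
move=> tr r1; apply/negbTE/eqP.
case: (ltngtP (t + 1) r) => [lt|gt|e].
- by rewrite modn_small // => /eqP; rewrite addn1 (gtn_eqF (ltnSn t)).
- by move: gt; rewrite addn1 ltnS leqNgt tr.
- rewrite e modnn => t0; move: e; rewrite -t0 add0n => e; by move: r1; rewrite -e.
Qed.

Lemma step2 n d r (x : QV n r) m : (step d x m).2 = lstep x.2 m.
Proof. by case: m. Qed.

Lemma edge_cls n d r (x : QV n r) m i : 0 < n -> d <= n -> 1 < r ->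
  validm d x.2 m -> i <= d -> Defs.inE d i x (step d x m) = (cls m == i).
Proof.
move=> n0 dn r1; case: m => [y|j] /=.
  move=> vy id; rewrite /Defs.inE /inE0 /inEi /= eqxx /=.
  case: i id => [|i] id /=; first by rewrite vy.
  have -> : (x.2 == y) = false.
    apply/negbTE/eqP => E; move: vy; rewrite -E.
    by rewrite eq_sym succ_mod_neq.
  by [].
move=> /andP[j0 jd] id; rewrite /Defs.inE /inE0 /inEi /=.
case: (i =P 0) => [->|ine0].
  have -> : (x.1 == flip x.1 (j + d * x.2)) = false.
    apply/negbTE/eqP => E.
    have := congr1 (fun f : {ffun 'I_n -> bool} => f (Ordinal (ltn_pmod (j + d * x.2) n0))) E.
    by rewrite /flip ffunE /= eqxx; case: (x.1 _).
  by apply/esym/negbTE; rewrite -lt0n.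
rewrite eqxx /= eq_sym flip_eq // eqn_modDr small_mod_inj //.
- by rewrite lt0n (leq_trans id dn) andbT; apply/eqP.
- by rewrite j0 (leq_trans jd dn).
Qed.

Lemma countE_traj n d r (x : QV n r) ms i : 0 < n -> d <= n -> 1 < r ->
  validL d x.2 ms -> i <= d ->
  countE d i x (traj d x ms) = count (fun m => cls m == i) ms.
Proof.
move=> n0 dn r1; elim: ms x => //= m ms IH x /andP[vm vms] id.
rewrite /countE /= -/(countE d i (step d x m) (traj d (step d x m) ms)).
by rewrite edge_cls // IH // step2.
Qed.

Lemma qadj_step n d r (x : QV n r) m : validm d x.2 m -> Qadj d x (step d x m).
Proof.
case: m => [y|j] /= vm; rewrite /Qadj.
  by rewrite /inE0 /= eqxx vm.
move: vm => /andP[j0 jd]; apply/orP; right; apply/existsP.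
exists (Ordinal (jd : j < d.+1)); by rewrite /= j0 /inEi /= !eqxx.
Qed.

Lemma path_traj n d r (x : QV n r) ms : validL d x.2 ms -> path (@Qadj n d r) x (traj d x ms).
Proof.
elim: ms x => //= m ms IH x /andP[vm vms].
by rewrite qadj_step // IH // step2.
Qed.

Lemma moves_of_path n d r (x : QV n r) p : path (@Qadj n d r) x p ->
  exists ms, validL d x.2 ms /\ traj d x ms = p.
Proof.
elim: p x => [|y p IH] x /=; first by move=> _; exists [::].
move=> /andP[a pp]; have [ms [v e]] := IH _ pp.
have [m [vm sm]] : exists m, validm d x.2 m /\ step d x m = y.
  move: a; rewrite /Qadj => /orP[|/existsP[i /andP[i0 ei]]].
    rewrite /inE0 => /andP[/eqP e1 e2]; exists (inl y.2); split => //.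
    by rewrite /= e1; case: (y).
  exists (inr (val i)); split; first by rewrite /= i0 -ltnS ltn_ord.
  move: ei; rewrite /inEi => /andP[/eqP e2 /eqP e1].
  by move: e1 e2; case: (y) => a l /= -> <-.
exists (m :: ms); split; first by rewrite /= vm -(step2 d) sm.
by rewrite /= sm e.
Qed.

Lemma foldl_step n d r (x : QV n r) ms :
  foldl (@step n d r) x ms =
  ([ffun k : 'I_n => x.1 k (+) odd (count_mem (val k) (fcL n d x.2 ms))], endL x.2 ms).
Proof.
elim: ms x => [|m ms IH] x /=.
  by case: x => a l /=; congr pair; apply/ffunP => k; rewrite ffunE addbF.
rewrite IH; case: m => [y|j] /=; first by [].
congr pair; apply/ffunP => k; rewrite !ffunE /= oddD oddb addbA.
by rewrite [val k == _]eq_sym.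
Qed.

Lemma zip_pairs_cat (T : Type) (y z : T) s1 s2 :
  zip (y :: s1 ++ z :: s2) (s1 ++ z :: s2) =
  zip (y :: s1) s1 ++ (last y s1, z) :: zip (z :: s2) s2.
Proof. by elim: s1 y => //= a s1 IH y; rewrite IH. Qed.

Lemma erase_loops (T : eqType) (e : rel T) x w : path e x w ->
  exists w', [/\ path e x w', uniq (x :: w'), last x w' = last x w,
    size w' <= size w &
    forall P, count P (zip (x :: w') w') <= count P (zip (x :: w) w)].
Proof.
elim: w x => [|y w0 IH] x /=.
  by move=> _; exists [::]; split.
move=> /andP[exy pw0]; have [w1 [pw1 uw1 lw1 sw1 cw1]] := IH y pw0.
case: (boolP (x \in y :: w1)) => [xin|xnin].
  move: xin; rewrite in_cons => /orP[/eqP exy'|xw1].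
    exists w1; rewrite exy'; split => //; first by rewrite ltnW // ltnS.
    move=> P; rewrite /=; apply: leq_trans (cw1 P) _; exact: leq_addl.
  move: pw1 uw1 lw1 sw1 cw1; case/splitPr: xw1 => p1 p2 pw1 uw1 lw1 sw1 cw1.
  exists p2; split.
  - by move: pw1; rewrite cat_path => /andP[_ /= /andP[]].
  - by move: uw1; rewrite -cat_cons cat_uniq => /and3P[].
  - by rewrite -lw1 last_cat.
  - apply: leq_trans (leq_trans _ sw1) (leqnSn _).
    rewrite size_cat /=; apply: leq_trans (leqnSn _) _; exact: leq_addl.
  - move=> P; apply: leq_trans (leq_addl (P (x, y)) _).
    apply: leq_trans (cw1 P).
    by rewrite zip_pairs_cat count_cat /= addnA leq_addl.
exists (y :: w1); split => //.
- by rewrite /= exy.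
- by rewrite /= -/(uniq (y :: w1)) uw1 andbT; move: xnin.
- by move=> P; rewrite /= leq_add2l.
Qed.

Lemma remove_flip n d r (l : 'I_r) ms c : validL d l ms -> c \in fcL n d l ms ->
  exists ms2, [/\ validL d l ms2, endL l ms2 = endL l ms,
    fcL n d l ms2 = rem c (fcL n d l ms), size ms2 < size ms &
    count (@isL r) ms2 = count (@isL r) ms /\
    forall i, count (fun m => cls m == i) ms2 <= count (fun m => cls m == i) ms].
Proof.
elim: ms l => [|m ms IH] l //=.
case: m => [y|j] /= /andP[vm vms].
  move=> cin; have [ms2 [v2 e2 f2 s2 [c2 k2]]] := IH y vms cin.
  exists (inl y :: ms2); split => //=; first by rewrite vm.
  by split; [rewrite c2 | move=> i; rewrite leq_add2l].
rewrite in_cons; case: (boolP ((j + d * l) %% n == c)) => [/eqP ec|nec] /=.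
  move=> _; exists ms; split => //.
  by split => // i; exact: leq_addl.
move=> /orP[/eqP ce|cin]; first by move: nec; rewrite ce eqxx.
have [ms2 [v2 e2 f2 s2 [c2 k2]]] := IH l vms cin.
exists (inr j :: ms2); split => //=; first by rewrite vm.
- by rewrite f2.
- by split => // i; rewrite leq_add2l.
Qed.

Lemma reduce n d r (l : 'I_r) ms : validL d l ms ->
  exists ms', [/\ validL d l ms', endL l ms' = endL l ms,
    (forall k, odd (count_mem k (fcL n d l ms')) = odd (count_mem k (fcL n d l ms))),
    count (@isL r) ms' = count (@isL r) ms &
    (forall i, count (fun m => cls m == i) ms' <= count (fun m => cls m == i) ms)]
  /\ uniq (fcL n d l ms') /\ (ms' = ms \/ size ms' < size ms).
Proof.
elim: ms l => [|m ms IH] l /=.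
  by move=> _; exists [::]; split; [split | split => //; left].
case: m => [y|j] /= /andP[vm vms].
  have [ms' [[v1 e1 o1 c1 k1] [u1 s1]]] := IH y vms.
  exists (inl y :: ms'); split; first split => //=.
  - by rewrite vm.
  - by rewrite c1.
  - by move=> i; rewrite leq_add2l.
  split => //; case: s1 => [->|s1]; [by left | by right].
have [ms' [[v1 e1 o1 c1 k1] [u1 s1]]] := IH l vms.
set c := (j + d * l) %% n.
have sz : size ms' <= size ms by case: s1 => [->|/ltnW].
case: (boolP (c \in fcL n d l ms')) => [cin|cnin].
  have [ms2 [v2 e2 f2 s2 [c2 k2]]] := remove_flip v1 cin.
  exists ms2; split; first split => //.
  - by rewrite e2 e1.
  - move=> k; rewrite f2 oddD -o1 (permP (perm_to_rem cin)) /= oddD.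
    by rewrite addbA addbb.
  - by rewrite c2 c1.
  - move=> i; apply: leq_trans (k2 i) _; apply: leq_trans (k1 i) _.
    exact: leq_addl.
  split; first by rewrite f2 rem_uniq.
  right; apply: leq_trans s2 _; exact: leq_trans sz _.
exists (inr j :: ms'); split; first split => //=.
- by rewrite vm.
- by move=> k; rewrite !oddD o1.
- by move=> i; rewrite leq_add2l.
split; first by rewrite /= cnin.
by case: s1 => [->|s1]; [left | right].
Qed.

Lemma count_cls_fc n d r (l : 'I_r) ms i : d %| n -> 0 < i <= d -> validL d l ms ->
  count (fun m => cls m == i) ms = count (fun c => c %% d == i %% d) (fcL n d l ms).
Proof.
move=> dn /andP[i0 id]; elim: ms l => [|m ms IH] l //=.
case: m => [y|j] /= /andP[vm vms].
  have -> : (0 == i) = false by rewrite eq_sym eqn0Ngt i0.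
  by rewrite (IH y).
rewrite (IH l) // modn_dvdm //.
have -> : (j + d * l) %% d = j %% d by rewrite addnC mulnC modnMDl.
by rewrite small_mod_inj // i0.
Qed.

Lemma size_split n d r (l : 'I_r) ms :
  size ms = count (@isL r) ms + size (fcL n d l ms).
Proof.
elim: ms l => [|m ms IH] l //=; case: m => [y|j] /=.
  by rewrite (IH y).
by rewrite (IH l) addnS.
Qed.

Lemma cls0_isL d r (l : 'I_r) ms : validL d l ms ->
  count (fun m => cls m == 0) ms = count (@isL r) ms.
Proof.
elim: ms l => [|m ms IH] l //=; case: m => [y|j] /= /andP[vm vms].
  by rewrite (IH y).
by rewrite (IH l) //; move: vm => /andP[j0 _]; rewrite eqn0Ngt j0.
Qed.

Lemma fc_lt n d r (l : 'I_r) ms : 0 < n -> all (fun c => c < n) (fcL n d l ms).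
Proof.
move=> n0; elim: ms l => [|m ms IH] l //=; case: m => [y|j] /=.
  exact: IH.
by rewrite ltn_pmod // IH.
Qed.

Lemma reduced_perm n d r (x : QV n r) ms1 ms2 : 0 < n ->
  uniq (fcL n d x.2 ms1) -> uniq (fcL n d x.2 ms2) ->
  foldl (@step n d r) x ms1 = foldl (@step n d r) x ms2 ->
  perm_eq (fcL n d x.2 ms1) (fcL n d x.2 ms2).
Proof.
move=> n0 u1 u2; rewrite !foldl_step => [[E _]].
apply: uniq_perm => // k.
case: (ltnP k n) => [kn|kn].
  have := congr1 (fun f : {ffun 'I_n -> bool} => f (Ordinal kn)) E.
  rewrite !ffunE /= !count_uniq_mem // !oddb.
  by case: (x.1 _) => /=; [move/negb_inj | ].
have F s : all (fun c => c < n) s -> (k \in s) = false.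
  move=> /allP H; apply/negbTE/negP => /H; by rewrite ltnNge kn.
by rewrite !F // fc_lt.
Qed.

Lemma dir_if n d r : 0 < n -> d <= n -> 1 < r -> d %| n -> orbit_proportional n d r.
Proof.
move=> n0 dn r1 ddn u v p p' [pp up lp] [pp' up' lp'] short i id.
have [ms [vms tms]] := moves_of_path pp.
have [ms' [vms' tms']] := moves_of_path pp'.
have endms : foldl (@step n d r) u ms = v by rewrite -last_traj tms.
have endms' : foldl (@step n d r) u ms' = v by rewrite -last_traj tms'.
have mkpath : forall ms0, validL d u.2 ms0 -> foldl (@step n d r) u ms0 = v ->
    exists q, [/\ is_Qpath d u v q, size q <= size ms0 &
      forall j, j <= d -> countE d j u q <= count (fun m => cls m == j) ms0].
  move=> ms0 v0 e0; have [q [pq uq lq sq cq]] := erase_loops (path_traj v0).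
  exists q; split.
  - by split => //; rewrite lq last_traj.
  - by rewrite -(size_traj d u ms0).
  - move=> j jd; rewrite -(@countE_traj n d r u ms0 j) //.
    exact: (cq (fun e => Defs.inE d j e.1 e.2)).
have endr : forall ms1 ms2, endL u.2 ms1 = endL u.2 ms2 ->
    (forall k, odd (count_mem k (fcL n d u.2 ms1)) = odd (count_mem k (fcL n d u.2 ms2))) ->
    foldl (@step n d r) u ms1 = foldl (@step n d r) u ms2.
  move=> ms1 ms2 e1 o1; rewrite !foldl_step e1; congr pair.
  by apply/ffunP => k; rewrite !ffunE o1.
have [rms [[vr er or cr kr] [ur sr]]] := reduce n vms.
have rmsE : rms = ms.
  case: sr => // lt; exfalso.
  have [q [Qq sq _]] := mkpath rms vr (etrans (endr _ _ er or) endms).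
  have := short q Qq; rewrite -tms size_traj => H.
  by move: lt; rewrite ltnNge (leq_trans H sq).
subst rms.
have [rms' [[vr' er' or' cr' kr'] [ur' _]]] := reduce n vms'.
have [q' [Qq' sq' _]] := mkpath rms' vr' (etrans (endr _ _ er' or') endms').
have pe : perm_eq (fcL n d u.2 ms) (fcL n d u.2 rms').
  by apply: reduced_perm => //; rewrite endms (endr _ _ er' or') endms'.
rewrite -tms -tms' !countE_traj //.
case: i id => [|i] id.
  rewrite (cls0_isL vms) (cls0_isL vms') -cr'.
  have := short q' Qq'; rewrite -tms size_traj => H.
  have := leq_trans H sq'.
  by rewrite (size_split n d u.2 ms) (size_split n d u.2 rms') (perm_size pe) leq_add2r.
rewrite (@count_cls_fc n d r u.2 ms i.+1 ddn) // (permP pe) -(@count_cls_fc n d r u.2 rms' i.+1 ddn) //.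
Qed.

Definition lay r (r0 : 0 < r) t : 'I_r := Ordinal (ltn_pmod t r0).
Definition ups r (r0 : 0 < r) s k : seq (mv r) := [seq inl (lay r0 t.+1) | t <- iota s k].

Lemma ups_props d r (r0 : 0 < r) n s k :
  [/\ validL d (lay r0 s) (ups r0 s k), endL (lay r0 s) (ups r0 s k) = lay r0 (s + k),
      fcL n d (lay r0 s) (ups r0 s k) = [::] &
      forall j, count (fun m => cls m == j.+1) (ups r0 s k) = 0].
Proof.
elim: k s => [|k IH] s.
  by split => //; rewrite addn0.
have [v e f c] := IH s.+1.
split => /=.
- rewrite v andbT; apply/orP; left; by rewrite /= modnDml addn1.
- by rewrite /endL /= -/(endL _ _) e addSnnS.
- exact: f.
- by move=> j; rewrite c.
Qed.

Lemma validL_cat d r (l : 'I_r) a b :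
  validL d l (a ++ b) = validL d l a && validL d (endL l a) b.
Proof. by elim: a l => //= m a IH l; rewrite IH andbA. Qed.

Lemma endL_cat r (l : 'I_r) a b : endL l (a ++ b) = endL (endL l a) b.
Proof. by rewrite /endL foldl_cat. Qed.

Lemma fcL_cat n d r (l : 'I_r) a b :
  fcL n d l (a ++ b) = fcL n d l a ++ fcL n d (endL l a) b.
Proof. by elim: a l => //= m a IH l; case: m => [y|j] /=; rewrite IH. Qed.

Lemma flip_neq n (a : {ffun 'I_n -> bool}) j : 0 < n -> a != flip a j.
Proof.
move=> n0; apply/negP => /eqP E.
have := congr1 (fun f : {ffun 'I_n -> bool} => f (Ordinal (ltn_pmod j n0))) E.
by rewrite /flip ffunE /= eqxx; case: (a _).
Qed.

Lemma dir_onlyif n d r : 2 <= n -> 1 <= d -> 3 <= r -> d <= n -> d * r %% n = 0 ->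
  orbit_proportional n d r -> d %| n.
Proof.
move=> n2 d1 r3 dn drn op; apply/negPn/negP => ndn.
have n0 : 0 < n by apply: leq_trans n2.
have r0 : 0 < r by apply: leq_trans r3.
have r1 : 1 < r by apply: leq_trans r3.
set g := gcdn d n.
have g0 : 0 < g by rewrite gcdn_gt0 d1.
have gd : g < d.
  rewrite ltn_neqAle dvdn_leq ?dvdn_gcdl // andbT.
  by apply/negP => /eqP /gcdn_idPl; apply/negP.
have [km kn ekm _] := egcdnP n (d1 : 0 < d).
set x := km %% r.
have dx : (d * x) %% n = g.
  have /dvdnP [t et] : n %| d * r by rewrite /dvdn drn.
  have -> : (d * x) %% n = (d * km) %% n.
    rewrite [in RHS](divn_eq km r) mulnDr mulnCA et mulnA.
    by rewrite modnMDl.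
  rewrite mulnC ekm modnMDl modn_small //; exact: leq_trans gd dn.
pose a0 : {ffun 'I_n -> bool} := [ffun _ => false].
pose u : QV n r := (a0, lay r0 0).
pose v : QV n r := step d u (inr g.+1).
pose ms : seq (mv r) := ups r0 0 x ++ inr 1 :: ups r0 x (r - x).
have [va ea fa ca] := @ups_props d r r0 n 0 x.
have [vb eb fb cb] := @ups_props d r r0 n x (r - x).
have vms : validL d u.2 ms.
  by rewrite validL_cat va ea /= d1 vb.
have xr : x < r by rewrite ltn_pmod.
have ems : foldl (@step n d r) u ms = v.
  rewrite foldl_step /u /v /= endL_cat ea /= eb fcL_cat fa ea /= fb.
  congr pair.
    apply/ffunP => k; rewrite !ffunE /= addn0 oddb mod0n muln0 addn0 add0n eq_sym.
    by rewrite (modn_small xr) -modnDmr dx add1n.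
  by apply: val_inj; rewrite /= subnKC ?modnn ?mod0n // ltnW.
have [q [pq uq lq _ cq]] := erase_loops (path_traj vms).
have vv : validm d u.2 (inr g.+1) by rewrite /= gd.
have Qp : is_Qpath d u v [:: v].
  split => //=; first by rewrite qadj_step.
  rewrite andbT mem_seq1; apply/negP => /eqP [E].
  by move: (@flip_neq n a0 (g.+1 + d * (0 %% r)) n0); rewrite -E eqxx.
have Qq : is_Qpath d u v q by split => //; rewrite lq last_traj.
have short : forall q0, is_Qpath d u v q0 -> size [:: v] <= size q0.
  move=> [|y q0] [_ _ /= l0] //.
  move: l0 => /(congr1 fst) /= E.
  by move: (@flip_neq n a0 (g.+1 + d * (0 %% r)) n0); rewrite -E eqxx.
have := op u v [:: v] q Qp Qq short g.+1 gd.
have -> : countE d g.+1 u [:: v] = 1.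
  by rewrite /countE /= addn0 /v edge_cls // ?eqxx.
move=> H; have := leq_trans H (cq (fun e => Defs.inE d g.+1 e.1 e.2)).
rewrite -/(countE d g.+1 u (traj d u ms)) countE_traj //.
rewrite count_cat ca /= cb.
by rewrite (_ : (1 == g.+1) = false) // eqSS eq_sym eqn0Ngt g0.
Qed.

Theorem mainTheorem17 (n d r : nat) :
  2 <= n -> 1 <= d -> 3 <= r -> d <= n -> d * r %% n = 0 ->
  (orbit_proportional n d r <-> d %| n).
Proof.
move=> n2 d1 r3 dn drn; split; first exact: dir_onlyif.
apply: dir_if => //; [exact: leq_trans n2 | exact: leq_trans r3].
Qed.
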